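(* Let $a<b$, $k>0$, $\lambda\in(0,\pi/2]$ and $f\in C^3([a,b])$. For every sequence $\{\epsilon_n\}_{n=0}^\infty$ with $\epsilon_n\in J_n$ for all $n$, and for every $n$, the Neumann problem $$\epsilon_n y''+ky=f(t),\quad t\in[a,b],\qquad y'(a)=0,\ y'(b)=0$$ has a unique solution $y_{\epsilon_n}$, and $y_{\epsilon_n}\to u$ uniformly on $[a,b]$ as $n\to\infty$, where $u(t)=f(t)/k$ is the solution of the reduced equation $ky=f(t)$. More precisely, there is a constant $C$ (depending only on $f,k,\lambda,a,b$, not on $n$) such that $$\sup_{t\in[a,b]}\Big|y_{\epsilon_n}(t)-\frac{f(t)}{k}\Big|\le C\sqrt{\epsilon_n}\quad\text{for all } n,$$ i.e. $y_{\epsilon_n}(t)=f(t)/k+\mathcal O(\sqrt{\epsilon_n})$ uniformly on $[a,b]$.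
   Context: For a fixed constant $\lambda\in(0,\pi/2]$ and $n=0,1,2,\dots$ define the closed intervals $$J_n=\left[\,k\left(\frac{b-a}{(n+1)\pi-\lambda}\right)^2,\ k\left(\frac{b-a}{n\pi+\lambda}\right)^2\,\right].$$ Note that $\epsilon\in J_n$ iff $\sqrt{k/\epsilon}\,(b-a)\in[n\pi+\lambda,(n+1)\pi-\lambda]$. *)

(* Defs.v *)
From Stdlib Require Import Reals Lra.
Open Scope R_scope.

Definition deriv_on (a b : R) (g g' : R -> R) : Prop :=
  forall x, a <= x <= b ->
  forall e, 0 < e -> exists d, 0 < d /\
    forall h, h <> 0 -> Rabs h < d -> a <= x + h <= b ->
      Rabs ((g (x + h) - g x) / h - g' x) < e.

Definition cont_on (a b : R) (g : R -> R) : Prop :=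
  forall x, a <= x <= b ->
  forall e, 0 < e -> exists d, 0 < d /\
    forall z, a <= z <= b -> Rabs (z - x) < d -> Rabs (g z - g x) < e.

Definition C3_on (a b : R) (f : R -> R) : Prop :=
  exists f1 f2 f3 : R -> R,
    deriv_on a b f f1 /\ deriv_on a b f1 f2 /\ deriv_on a b f2 f3 /\
    cont_on a b f3.

Definition neumann_sol (a b eps k : R) (f y : R -> R) : Prop :=
  exists y1 y2 : R -> R,
    deriv_on a b y y1 /\ deriv_on a b y1 y2 /\
    (forall t, a <= t <= b -> eps * y2 t + k * y t = f t) /\
    y1 a = 0 /\ y1 b = 0.

Definition in_J (a b k lam : R) (n : nat) (eps : R) : Prop :=
  k * ((b - a) / ((INR n + 1) * PI - lam)) ^ 2 <= eps <=
  k * ((b - a) / (INR n * PI + lam)) ^ 2.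

(* Main.v *)
Require Import Defs.
From Stdlib Require Import Reals Lra Lia ZArith.
From Coquelicot Require Import Coquelicot.
Open Scope R_scope.

Definition clamp (a b x : R) := Rmax a (Rmin b x).

Lemma clamp_in a b x : a <= b -> a <= clamp a b x <= b.
Proof. intros. unfold clamp, Rmax, Rmin. repeat destruct Rle_dec; lra. Qed.

Lemma clamp_id a b x : a <= x <= b -> clamp a b x = x.
Proof. intros. unfold clamp, Rmax, Rmin. repeat destruct Rle_dec; lra. Qed.

Lemma clamp_lip a b s c : a <= b -> Rabs (clamp a b s - clamp a b c) <= Rabs (s - c).
Proof. intros. unfold clamp, Rmax, Rmin. repeat destruct Rle_dec; unfold Rabs;
  repeat destruct Rcase_abs; lra. Qed.

Lemma deriv_cont a b g g' : deriv_on a b g g' -> cont_on a b g.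
Proof.
  intros H x hx e he.
  destruct (H x hx 1 Rlt_0_1) as [d [hd H1]].
  assert (hp : 0 < Rabs (g' x) + 1) by (pose proof (Rabs_pos (g' x)); lra).
  exists (Rmin d (e / (Rabs (g' x) + 1))). split.
  { apply Rmin_pos; auto. apply Rdiv_lt_0_compat; auto. }
  intros z hz hzx.
  destruct (Req_dec z x) as [->|hne].
  { unfold Rminus; rewrite Rplus_opp_r, Rabs_R0; auto. }
  set (h := z - x).
  assert (hh : h <> 0) by (unfold h; lra).
  assert (hd1 : Rabs h < d) by (unfold h; eapply Rlt_le_trans; [exact hzx| apply Rmin_l]).
  assert (hd2 : Rabs h < e / (Rabs (g' x) + 1)) by (unfold h; eapply Rlt_le_trans; [exact hzx| apply Rmin_r]).
  assert (hz' : a <= x + h <= b) by (unfold h; lra).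
  specialize (H1 h hh hd1 hz').
  replace (x + h) with z in H1 by (unfold h; ring).
  assert (E : g z - g x = ((g z - g x) / h - g' x) * h + g' x * h) by (field; auto).
  rewrite E.
  eapply Rle_lt_trans; [apply Rabs_triang|]. rewrite !Rabs_mult.
  assert (Rabs h * (Rabs (g' x) + 1) < e).
  { apply (Rmult_lt_compat_r (Rabs (g' x) + 1)) in hd2; auto.
    replace (e / (Rabs (g' x) + 1) * (Rabs (g' x) + 1)) with e in hd2 by (field; lra). lra. }
  pose proof (Rabs_pos h). nra.
Qed.

Lemma cont_clamp a b g : a <= b -> cont_on a b g ->
  forall c, continuity_pt (fun s => g (clamp a b s)) c.
Proof.
  intros hab H c. unfold continuity_pt, continue_in, limit1_in, limit_in. simpl. unfold R_dist.
  intros e he. destruct (H (clamp a b c) (clamp_in a b c hab) e he) as [d [hd H1]].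
  exists d. split; auto. intros x [_ hx]. apply H1. apply clamp_in; auto.
  eapply Rle_lt_trans; [apply clamp_lip; auto| auto].
Qed.

Lemma deriv_interior_clamp a b g g' x : deriv_on a b g g' -> a < x < b ->
  derivable_pt_lim (fun s => g (clamp a b s)) x (g' x).
Proof.
  intros H hx e he.
  destruct (H x (conj (Rlt_le _ _ (proj1 hx)) (Rlt_le _ _ (proj2 hx))) e he) as [d [hd H1]].
  assert (hp : 0 < Rmin d (Rmin (x - a) (b - x))) by (repeat apply Rmin_pos; lra).
  exists (mkposreal _ hp). simpl. intros h hh hlt.
  assert (h1 : Rabs h < d) by (eapply Rlt_le_trans; [exact hlt|apply Rmin_l]).
  assert (h2 : Rabs h < Rmin (x - a) (b - x)) by (eapply Rlt_le_trans; [exact hlt|apply Rmin_r]).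
  assert (h3 : Rabs h < x - a) by (eapply Rlt_le_trans; [exact h2|apply Rmin_l]).
  assert (h4 : Rabs h < b - x) by (eapply Rlt_le_trans; [exact h2|apply Rmin_r]).
  assert (hin : a <= x + h <= b) by (revert h3 h4; unfold Rabs; destruct Rcase_abs; lra).
  rewrite (clamp_id a b (x + h)) by auto. rewrite (clamp_id a b x) by lra.
  apply H1; auto.
Qed.

Lemma deriv_global a b g g' : (forall x, a <= x <= b -> derivable_pt_lim g x (g' x)) ->
  deriv_on a b g g'.
Proof.
  intros H x hx e he. destruct (H x hx e he) as [d Hd]. exists d. split.
  apply cond_pos. intros h hh hlt _. apply Hd; auto.
Qed.

Lemma MVI G G' x y M : x <= y -> (forall c, x <= c <= y -> continuity_pt G c) ->
  (forall c, x < c < y -> derivable_pt_lim G c (G' c) /\ Rabs (G' c) <= M) ->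
  Rabs (G y - G x) <= M * (y - x).
Proof.
  intros hxy Hc Hd.
  destruct (Req_dec x y) as [<-|hne].
  { unfold Rminus; rewrite !Rplus_opp_r, Rabs_R0. lra. }
  assert (hlt : x < y) by lra.
  pose (pr1 := fun c (P : x < c < y) => exist (fun l => derivable_pt_lim G c l) (G' c) (proj1 (Hd c P))).
  pose (pr2 := fun c (P : x < c < y) => derivable_pt_id c).
  destruct (MVT G id x y pr1 pr2 hlt Hc
     (fun c _ => derivable_continuous_pt _ _ (derivable_pt_id c))) as [c [P E]].
  unfold pr2 in E. rewrite derive_pt_id in E. simpl in E. unfold id in E.
  replace (G y - G x) with (G' c * (y - x)) by lra.
  rewrite Rabs_mult, (Rabs_right (y - x)) by lra.
  apply Rmult_le_compat_r; [lra| apply (proj2 (Hd c P))].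
Qed.

Lemma DRmul f g x df dg : derivable_pt_lim f x df -> derivable_pt_lim g x dg ->
  derivable_pt_lim (fun t => f t * g t) x (df * g x + f x * dg).
Proof. intros. exact (derivable_pt_lim_mult f g x df dg H H0). Qed.
Lemma DRplus f g x df dg : derivable_pt_lim f x df -> derivable_pt_lim g x dg ->
  derivable_pt_lim (fun t => f t + g t) x (df + dg).
Proof. intros. exact (derivable_pt_lim_plus f g x df dg H H0). Qed.
Lemma DRminus f g x df dg : derivable_pt_lim f x df -> derivable_pt_lim g x dg ->
  derivable_pt_lim (fun t => f t - g t) x (df - dg).
Proof. intros. exact (derivable_pt_lim_minus f g x df dg H H0). Qed.
Lemma DRscal f c x df : derivable_pt_lim f x df ->
  derivable_pt_lim (fun t => c * f t) x (c * df).
Proof. intros. exact (derivable_pt_lim_scal f c x df H). Qed.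
Lemma DRval f x l l' : derivable_pt_lim f x l -> l = l' -> derivable_pt_lim f x l'.
Proof. intros H ->; auto. Qed.
Lemma Dcos w a s : derivable_pt_lim (fun t => cos (w*(t-a))) s (- w * sin (w*(s-a))).
Proof. apply is_derive_Reals. auto_derive; auto; unfold Rminus; ring. Qed.
Lemma Dsin w a s : derivable_pt_lim (fun t => sin (w*(t-a))) s (w * cos (w*(s-a))).
Proof. apply is_derive_Reals. auto_derive; auto; unfold Rminus; ring. Qed.
Lemma Dcos' w b s : derivable_pt_lim (fun t => cos (w*(b-t))) s (w * sin (w*(b-s))).
Proof. apply is_derive_Reals. auto_derive; auto; unfold Rminus; ring. Qed.
Lemma Dsin' w b s : derivable_pt_lim (fun t => sin (w*(b-t))) s (- w * cos (w*(b-s))).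
Proof. apply is_derive_Reals. auto_derive; auto; unfold Rminus; ring. Qed.

Lemma CTmul f g x : continuity_pt f x -> continuity_pt g x -> continuity_pt (fun t => f t * g t) x.
Proof. intros. exact (continuity_pt_mult f g x H H0). Qed.
Lemma CTplus f g x : continuity_pt f x -> continuity_pt g x -> continuity_pt (fun t => f t + g t) x.
Proof. intros. exact (continuity_pt_plus f g x H H0). Qed.
Lemma CTminus f g x : continuity_pt f x -> continuity_pt g x -> continuity_pt (fun t => f t - g t) x.
Proof. intros. exact (continuity_pt_minus f g x H H0). Qed.
Lemma CTscal f c x : continuity_pt f x -> continuity_pt (fun t => c * f t) x.
Proof. intros. exact (continuity_pt_scal f c x H). Qed.
Lemma CTder f x l : derivable_pt_lim f x l -> continuity_pt f x.
Proof. intros. apply derivable_continuous_pt. exists l; auto. Qed.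

Lemma abs_cos_le x : Rabs (cos x) <= 1.
Proof. pose proof (COS_bound x). unfold Rabs; destruct Rcase_abs; lra. Qed.

Lemma key a b w M Z Z1 Z2 :
  a < b -> 0 < w ->
  (forall c, a <= c <= b -> continuity_pt Z c /\ continuity_pt Z1 c) ->
  (forall x, a < x < b -> derivable_pt_lim Z x (Z1 x) /\ derivable_pt_lim Z1 x (Z2 x)
      /\ Rabs (Z2 x + w^2 * Z x) <= M) ->
  forall t, a <= t <= b ->
  Rabs (w * Z t * sin (w*(b-a))) <= Rabs (Z1 a) + Rabs (Z1 b) + M * (b - a).
Proof.
  intros hab hw Hc Hd t ht.
  set (P1 := fun s => Z1 s * cos (w*(s-a)) + w * Z s * sin (w*(s-a))).
  set (P2 := fun s => Z1 s * cos (w*(b-s)) - w * Z s * sin (w*(b-s))).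
  assert (E1 : Rabs (P1 t - P1 a) <= M * (t - a)).
  { apply (MVI P1 (fun s => (Z2 s + w^2 * Z s) * cos (w*(s-a)))); [lra| |].
    - intros c hc. destruct (Hc c ltac:(lra)) as [h1 h2]. unfold P1.
      apply CTplus; apply CTmul; auto.
      + eapply CTder; apply Dcos.
      + apply CTscal; auto.
      + eapply CTder; apply Dsin.
    - intros c hc. destruct (Hd c ltac:(lra)) as [h1 [h2 h3]]. split.
      + unfold P1. eapply DRval.
        * apply DRplus; [apply DRmul; [exact h2| apply Dcos]|].
          apply DRmul; [apply DRscal; exact h1| apply Dsin].
        * simpl; ring.
      + rewrite Rabs_mult. pose proof (abs_cos_le (w*(c-a))). pose proof (Rabs_pos (Z2 c + w ^ 2 * Z c)). nra. }
  assert (E2 : Rabs (P2 b - P2 t) <= M * (b - t)).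
  { apply (MVI P2 (fun s => (Z2 s + w^2 * Z s) * cos (w*(b-s)))); [lra| |].
    - intros c hc. destruct (Hc c ltac:(lra)) as [h1 h2]. unfold P2.
      apply CTminus; apply CTmul; auto.
      + eapply CTder; apply Dcos'.
      + apply CTscal; auto.
      + eapply CTder; apply Dsin'.
    - intros c hc. destruct (Hd c ltac:(lra)) as [h1 [h2 h3]]. split.
      + unfold P2. eapply DRval.
        * apply DRminus; [apply DRmul; [exact h2| apply Dcos']|].
          apply DRmul; [apply DRscal; exact h1| apply Dsin'].
        * cbv beta; ring.
      + rewrite Rabs_mult. pose proof (abs_cos_le (w*(b-c))). pose proof (Rabs_pos (Z2 c + w ^ 2 * Z c)). nra. }
  assert (A1 : P1 a = Z1 a).
  { unfold P1. replace (w*(a-a)) with 0 by ring. rewrite cos_0, sin_0. ring. }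
  assert (A2 : P2 b = Z1 b).
  { unfold P2. replace (w*(b-b)) with 0 by ring. rewrite cos_0, sin_0. ring. }
  assert (Id : w * Z t * sin (w*(b-a)) = cos (w*(b-t)) * P1 t - cos (w*(t-a)) * P2 t).
  { replace (w*(b-a)) with (w*(t-a) + w*(b-t)) by ring. rewrite sin_plus. unfold P1, P2. ring. }
  rewrite Id.
  assert (B1 : Rabs (P1 t) <= Rabs (Z1 a) + M * (t - a)).
  { replace (P1 t) with ((P1 t - P1 a) + Z1 a) by (rewrite A1; ring).
    eapply Rle_trans; [apply Rabs_triang|]. lra. }
  assert (B2 : Rabs (P2 t) <= Rabs (Z1 b) + M * (b - t)).
  { replace (P2 t) with (Z1 b - (P2 b - P2 t)) by (rewrite A2; ring).
    eapply Rle_trans; [apply Rabs_triang|]. rewrite Rabs_Ropp. lra. }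
  eapply Rle_trans; [apply Rabs_triang|]. rewrite Rabs_Ropp, !Rabs_mult.
  pose proof (abs_cos_le (w*(b-t))). pose proof (abs_cos_le (w*(t-a))).
  pose proof (Rabs_pos (P1 t)). pose proof (Rabs_pos (P2 t)).
  assert (Rabs (cos (w * (b - t))) * Rabs (P1 t) <= Rabs (P1 t)) by nra.
  assert (Rabs (cos (w * (t - a))) * Rabs (P2 t) <= Rabs (P2 t)) by nra.
  lra.
Qed.

Lemma key_on a b w M y y1 y2 g g1 g2 c :
  a < b -> 0 < w -> deriv_on a b y y1 -> deriv_on a b y1 y2 ->
  deriv_on a b g g1 -> deriv_on a b g1 g2 ->
  (forall x, a < x < b -> Rabs ((y2 x - c * g2 x) + w^2 * (y x - c * g x)) <= M) ->
  forall t, a <= t <= b ->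
  Rabs (w * (y t - c * g t) * sin (w*(b-a))) <=
    Rabs (y1 a - c * g1 a) + Rabs (y1 b - c * g1 b) + M * (b - a).
Proof.
  intros hab hw Hy Hy1 Hg Hg1 HM t ht.
  pose (cl := clamp a b).
  pose proof (key a b w M (fun s => y (cl s) - c * g (cl s)) (fun s => y1 (cl s) - c * g1 (cl s))
     (fun s => y2 (cl s) - c * g2 (cl s)) hab hw) as K.
  assert (hab' : a <= b) by lra.
  assert (Hc : forall z, a <= z <= b -> continuity_pt (fun s => y (cl s) - c * g (cl s)) z /\
     continuity_pt (fun s => y1 (cl s) - c * g1 (cl s)) z).
  { intros z hz. split; apply CTminus; try apply CTscal; apply cont_clamp; auto;
      eapply deriv_cont; eauto. }
  assert (Hd : forall x, a < x < b ->
     derivable_pt_lim (fun s => y (cl s) - c * g (cl s)) x (y1 (cl x) - c * g1 (cl x)) /\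
     derivable_pt_lim (fun s => y1 (cl s) - c * g1 (cl s)) x (y2 (cl x) - c * g2 (cl x)) /\
     Rabs ((y2 (cl x) - c * g2 (cl x)) + w^2 * (y (cl x) - c * g (cl x))) <= M).
  { intros x hx. unfold cl. rewrite (clamp_id a b x) by lra. split; [|split].
    + apply DRminus; [|apply DRscal]; apply deriv_interior_clamp; auto.
    + apply DRminus; [|apply DRscal]; apply deriv_interior_clamp; auto.
    + apply HM; auto. }
  pose proof (K Hc Hd t ht) as G. unfold cl in G.
  rewrite !(clamp_id a b t), !(clamp_id a b a), !(clamp_id a b b) in G by lra.
  exact G.
Qed.

Lemma sin_shift n x : Rabs (sin (x + INR n * PI)) = Rabs (sin x).
Proof.
  induction n as [|n IH].
  - simpl. rewrite Rmult_0_l, Rplus_0_r. auto.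
  - rewrite S_INR. replace (x + (INR n + 1) * PI) with ((x + INR n * PI) + PI) by ring.
    rewrite neg_sin, Rabs_Ropp. auto.
Qed.

Lemma sin_ge_lam lam x : 0 < lam <= PI / 2 -> lam <= x <= PI - lam -> sin lam <= sin x.
Proof.
  intros hl hx. pose proof PI_RGT_0.
  destruct (Rle_dec x (PI/2)).
  - apply sin_incr_1; lra.
  - rewrite <- (sin_PI_x x). apply sin_incr_1; lra.
Qed.

Lemma J_facts a b k lam n eps : a < b -> 0 < k -> 0 < lam <= PI / 2 ->
  in_J a b k lam n eps ->
  0 < eps /\ sin lam <= Rabs (sin (sqrt (k / eps) * (b - a))).
Proof.
  intros hab hk hl [J1 J2]. pose proof PI_RGT_0.
  set (L := b - a) in *. set (p := INR n * PI + lam) in *. set (q := (INR n + 1) * PI - lam) in *.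
  pose proof (pos_INR n).
  assert (hp : 0 < p) by (unfold p; nra).
  assert (hq : p <= q) by (unfold p, q; nra).
  assert (hL : 0 < L) by (unfold L; lra).
  assert (he : 0 < eps).
  { eapply Rlt_le_trans; [|exact J1]. apply Rmult_lt_0_compat; auto.
    apply pow_lt. apply Rdiv_lt_0_compat; lra. }
  split; auto.
  set (w := sqrt (k / eps)).
  assert (hw : 0 < w) by (apply sqrt_lt_R0; apply Rdiv_lt_0_compat; auto).
  assert (hw2 : w ^ 2 = k / eps) by (apply pow2_sqrt; apply Rlt_le, Rdiv_lt_0_compat; auto).
  assert (HwL : eps * (w * L) ^ 2 = k * L ^ 2).
  { replace ((w*L)^2) with (w^2 * L^2) by ring. rewrite hw2. field. lra. }
  assert (Hp2 : eps * p ^ 2 <= k * L ^ 2).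
  { replace (k * L^2) with (k * (L / p) ^ 2 * p ^ 2) by (field; lra).
    apply Rmult_le_compat_r; [nra| auto]. }
  assert (Hq2 : k * L ^ 2 <= eps * q ^ 2).
  { replace (k * L^2) with (k * (L / q) ^ 2 * q ^ 2) by (field; lra).
    apply Rmult_le_compat_r; [nra| auto]. }
  assert (H1 : p <= w * L).
  { destruct (Rle_dec p (w*L)); auto. exfalso.
    assert (w * L < p) by lra. assert (0 < w * L) by nra.
    assert ((w*L)^2 < p^2) by nra. nra. }
  assert (H2 : w * L <= q).
  { destruct (Rle_dec (w*L) q); auto. exfalso.
    assert (q < w*L) by lra. assert (0 < q) by lra.
    assert (q^2 < (w*L)^2) by nra. nra. }
  replace (w * L) with ((w * L - INR n * PI) + INR n * PI) by ring.
  rewrite sin_shift.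
  assert (hs : sin lam <= sin (w * L - INR n * PI)).
  { apply sin_ge_lam; auto. unfold p, q in *. lra. }
  assert (0 < sin lam) by (apply sin_gt_0; lra).
  rewrite Rabs_right; lra.
Qed.

Lemma prim (g : R -> R) a : (forall x, continuity_pt g x) ->
  forall x, derivable_pt_lim (fun t => RInt g a t) x (g x).
Proof.
  intros Hg x. apply is_derive_Reals. apply is_derive_RInt with (a := a).
  - apply filter_forall. intro t. apply (@RInt_correct R_CompleteNormedModule). apply (@ex_RInt_continuous R_CompleteNormedModule).
    intros z _. apply continuity_pt_filterlim. apply Hg.
  - apply continuity_pt_filterlim. apply Hg.
Qed.

Lemma existence a b eps k f : a < b -> 0 < eps -> 0 < k -> cont_on a b f ->
  sin (sqrt (k / eps) * (b - a)) <> 0 -> exists y, neumann_sol a b eps k f y.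
Proof.
  intros hab he hk hf hs.
  set (w := sqrt (k / eps)) in *.
  assert (hw : 0 < w) by (apply sqrt_lt_R0; apply Rdiv_lt_0_compat; auto).
  assert (hw2 : w ^ 2 = k / eps) by (apply pow2_sqrt; apply Rlt_le, Rdiv_lt_0_compat; auto).
  set (fe := fun s => f (clamp a b s)).
  assert (Hfe : forall x, continuity_pt fe x) by (apply cont_clamp; auto; lra).
  set (g1 := fun s => cos (w*(s-a)) * fe s).
  set (g2 := fun s => sin (w*(s-a)) * fe s).
  assert (Hg1 : forall x, continuity_pt g1 x) by (intro; unfold g1; apply CTmul; auto; eapply CTder; apply Dcos).
  assert (Hg2 : forall x, continuity_pt g2 x) by (intro; unfold g2; apply CTmul; auto; eapply CTder; apply Dsin).
  set (I1 := fun t => RInt g1 a t).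
  set (I2 := fun t => RInt g2 a t).
  assert (DI1 : forall x, derivable_pt_lim I1 x (g1 x)) by (apply prim; auto).
  assert (DI2 : forall x, derivable_pt_lim I2 x (g2 x)) by (apply prim; auto).
  set (c0 := 1 / (eps * w)).
  set (Q := I2 b + cos (w*(b-a)) * I1 b / sin (w*(b-a))).
  set (y := fun t => c0 * (sin (w*(t-a)) * I1 t + cos (w*(t-a)) * (Q - I2 t))).
  set (y1 := fun t => c0 * w * (cos (w*(t-a)) * I1 t - sin (w*(t-a)) * (Q - I2 t))).
  set (y2 := fun t => - (w^2) * y t + fe t / eps).
  exists y, y1, y2. split; [|split; [|split; [|split]]].
  - apply deriv_global. intros x _. unfold y.
    eapply DRval.
    + apply DRscal. apply DRplus; apply DRmul.
      * apply Dsin.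
      * apply DI1.
      * apply Dcos.
      * apply DRminus; [apply (derivable_pt_lim_const Q)| apply DI2].
    + unfold y1, g1, g2. ring.
  - apply deriv_global. intros x _. unfold y1.
    eapply DRval.
    + apply DRscal. apply DRminus; apply DRmul.
      * apply Dcos.
      * apply DI1.
      * apply Dsin.
      * apply DRminus; [apply (derivable_pt_lim_const Q)| apply DI2].
    + unfold y2, y, g1, g2. pose proof (sin2_cos2 (w*(x-a))) as S. unfold Rsqr in S.
      assert (E : c0 * w = 1 / eps) by (unfold c0; field; lra).
      transitivity (c0 * w * (- w * (sin (w * (x - a)) * I1 x + cos (w * (x - a)) * (Q - I2 x)))
         + c0 * w * fe x * (sin (w * (x - a)) * sin (w * (x - a)) + cos (w * (x - a)) * cos (w * (x - a)))).
      * ring.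
      * rewrite S, E. unfold c0. field. lra.
  - intros t ht. unfold y2, fe. rewrite (clamp_id a b t) by auto. rewrite hw2. field. lra.
  - unfold y1. replace (w*(a-a)) with 0 by ring. rewrite cos_0, sin_0.
    unfold I1. rewrite RInt_point. simpl. unfold zero. simpl. ring.
  - unfold y1, Q. field. auto.
Qed.

Lemma uniq a b eps k f y z : a < b -> 0 < eps -> 0 < k ->
  sin (sqrt (k / eps) * (b - a)) <> 0 ->
  neumann_sol a b eps k f y -> neumann_sol a b eps k f z ->
  forall t, a <= t <= b -> y t = z t.
Proof.
  intros hab he hk hs [y1 [y2 [Y1 [Y2 [Y3 [Y4 Y5]]]]]] [z1 [z2 [Z1 [Z2 [Z3 [Z4 Z5]]]]]] t ht.
  set (w := sqrt (k / eps)) in *.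
  assert (hw : 0 < w) by (apply sqrt_lt_R0; apply Rdiv_lt_0_compat; auto).
  assert (hw2 : w ^ 2 = k / eps) by (apply pow2_sqrt; apply Rlt_le, Rdiv_lt_0_compat; auto).
  pose proof (key_on a b w 0 y y1 y2 z z1 z2 1 hab hw Y1 Y2 Z1 Z2) as K.
  assert (HM : forall x, a < x < b -> Rabs ((y2 x - 1 * z2 x) + w^2 * (y x - 1 * z x)) <= 0).
  { intros x hx. rewrite hw2.
    replace ((y2 x - 1 * z2 x) + k / eps * (y x - 1 * z x)) with
      (((eps * y2 x + k * y x) - (eps * z2 x + k * z x)) / eps) by (field; lra).
    rewrite Y3, Z3 by lra. unfold Rminus. rewrite Rplus_opp_r. unfold Rdiv. rewrite Rmult_0_l, Rabs_R0. lra. }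
  specialize (K HM t ht).
  rewrite Y4, Y5, Z4, Z5 in K.
  replace (0 - 1 * 0) with 0 in K by ring. rewrite Rabs_R0 in K.
  assert (E : w * (y t - 1 * z t) * sin (w * (b - a)) = 0).
  { apply Rabs_eq_0. pose proof (Rabs_pos (w * (y t - 1 * z t) * sin (w * (b - a)))). lra. }
  apply Rmult_integral in E. destruct E as [E|E]; [|contradiction].
  apply Rmult_integral in E. destruct E as [E|E]; lra.
Qed.

Theorem theorem1 (a b k lam : R) (f : R -> R)
  (hab : a < b) (hk : 0 < k) (hlam : 0 < lam <= PI / 2)
  (hf : C3_on a b f) :
  exists C : R,
  forall epsn : nat -> R, (forall n, in_J a b k lam n (epsn n)) ->
    (forall n,
       (exists y, neumann_sol a b (epsn n) k f y) /\
       (forall y z, neumann_sol a b (epsn n) k f y ->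
                    neumann_sol a b (epsn n) k f z ->
                    forall t, a <= t <= b -> y t = z t) /\
       (forall y, neumann_sol a b (epsn n) k f y ->
          forall t, a <= t <= b -> Rabs (y t - f t / k) <= C * sqrt (epsn n)))
    /\
    (forall ys : nat -> R -> R,
       (forall n, neumann_sol a b (epsn n) k f (ys n)) ->
       forall e, 0 < e -> exists N, forall n, (N <= n)%nat ->
         forall t, a <= t <= b -> Rabs (ys n t - f t / k) < e).
Proof.
  destruct hf as [f1 [f2 [f3 [F1 [F2 [F3 F4]]]]]].
  pose proof PI_RGT_0 as hPI.
  assert (hab' : a <= b) by lra.
  assert (hsl : 0 < sin lam) by (apply sin_gt_0; lra).
  assert (hc2 : forall c, a <= c <= b -> continuity_pt (fun s => Rabs (f2 (clamp a b s))) c).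
  { intros c _. apply (continuity_pt_comp (fun s => f2 (clamp a b s)) Rabs).
    - apply cont_clamp; auto. eapply deriv_cont; eauto.
    - apply Rcontinuity_abs. }
  destruct (continuity_ab_maj _ a b hab' hc2) as [Mx [HMx _]].
  set (M2 := Rabs (f2 (clamp a b Mx))).
  assert (HM2 : forall x, a <= x <= b -> Rabs (f2 x) <= M2).
  { intros x hx. pose proof (HMx x hx) as H. rewrite (clamp_id a b x hx) in H. exact H. }
  assert (hM2 : 0 <= M2) by apply Rabs_pos.
  set (K := Rabs (f1 a) / k + Rabs (f1 b) / k + M2 / k * (b - a)).
  assert (hK : 0 <= K).
  { unfold K. pose proof (Rabs_pos (f1 a)). pose proof (Rabs_pos (f1 b)).
    assert (0 <= Rabs (f1 a) / k) by (apply Rdiv_le_0_compat; lra).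
    assert (0 <= Rabs (f1 b) / k) by (apply Rdiv_le_0_compat; lra).
    assert (0 <= M2 / k) by (apply Rdiv_le_0_compat; lra). nra. }
  assert (hsk : 0 < sqrt k) by (apply sqrt_lt_R0; auto).
  set (C := K / (sqrt k * sin lam)).
  assert (hC : 0 <= C) by (unfold C; apply Rdiv_le_0_compat; [auto| apply Rmult_lt_0_compat; auto]).
  exists C. intros epsn HJ.
  assert (Bnd : forall n y, neumann_sol a b (epsn n) k f y ->
      forall t, a <= t <= b -> Rabs (y t - f t / k) <= C * sqrt (epsn n)).
  { intros n y [y1 [y2 [Y1 [Y2 [Y3 [Y4 Y5]]]]]] t ht.
    destruct (J_facts a b k lam n (epsn n) hab hk hlam (HJ n)) as [he hs].
    set (eps := epsn n) in *.
    set (w := sqrt (k / eps)) in *.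
    assert (hw : 0 < w) by (apply sqrt_lt_R0; apply Rdiv_lt_0_compat; auto).
    assert (hw2 : w ^ 2 = k / eps) by (apply pow2_sqrt; apply Rlt_le, Rdiv_lt_0_compat; auto).
    pose proof (key_on a b w (M2 / k) y y1 y2 f f1 f2 (1 / k) hab hw Y1 Y2 F1 F2) as KK.
    assert (HM : forall x, a < x < b ->
       Rabs ((y2 x - 1 / k * f2 x) + w^2 * (y x - 1 / k * f x)) <= M2 / k).
    { intros x hx. rewrite hw2.
      replace ((y2 x - 1 / k * f2 x) + k / eps * (y x - 1 / k * f x)) with
        (((eps * y2 x + k * y x) - f x) / eps - f2 x / k) by (field; lra).
      rewrite Y3 by lra. replace ((f x - f x) / eps - f2 x / k) with (- (f2 x / k)) by (field; lra).
      rewrite Rabs_Ropp. unfold Rdiv. rewrite Rabs_mult, (Rabs_right (/ k)) by (apply Rle_ge, Rlt_le, Rinv_0_lt_compat; auto).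
      apply Rmult_le_compat_r; [apply Rlt_le, Rinv_0_lt_compat; auto| apply HM2; lra]. }
    specialize (KK HM t ht). rewrite Y4, Y5 in KK.
    replace (Rabs (0 - 1 / k * f1 a) + Rabs (0 - 1 / k * f1 b) + M2 / k * (b - a)) with K in KK.
    2:{ unfold K. replace (0 - 1 / k * f1 a) with (- (f1 a / k)) by (field; lra).
        replace (0 - 1 / k * f1 b) with (- (f1 b / k)) by (field; lra).
        rewrite !Rabs_Ropp. unfold Rdiv. rewrite !Rabs_mult, !(Rabs_right (/ k)) by (apply Rle_ge, Rlt_le, Rinv_0_lt_compat; auto).
        ring. }
    replace (y t - 1 / k * f t) with (y t - f t / k) in KK by (field; lra).
    set (d := y t - f t / k) in *.
    rewrite !Rabs_mult, (Rabs_right w) in KK by lra.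
    assert (Hd : Rabs d * (w * sin lam) <= K).
    { pose proof (Rabs_pos d). eapply Rle_trans; [|exact KK]. assert (0 <= w * Rabs d) by nra. nra. }
    assert (hwe : w = sqrt k / sqrt eps) by (unfold w; apply sqrt_div; lra).
    assert (hse : 0 < sqrt eps) by (apply sqrt_lt_R0; auto).
    assert (Rabs d <= K / (w * sin lam)).
    { apply (Rmult_le_reg_r (w * sin lam)); [apply Rmult_lt_0_compat; auto|].
      replace (K / (w * sin lam) * (w * sin lam)) with K by (field; lra). auto. }
    replace (C * sqrt eps) with (K / (w * sin lam)); auto.
    unfold C. rewrite hwe. field. lra. }
  split.
  - intros n. destruct (J_facts a b k lam n (epsn n) hab hk hlam (HJ n)) as [he hs].
    assert (hs0 : sin (sqrt (k / epsn n) * (b - a)) <> 0).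
    { intro E. rewrite E, Rabs_R0 in hs. lra. }
    split; [|split].
    + apply existence; auto. eapply deriv_cont; eauto.
    + intros y z Hy Hz. apply (uniq a b (epsn n) k f); auto.
    + apply Bnd.
  - intros ys Hys e he.
    set (T := C * sqrt k * (b - a) / e).
    destruct (archimed (T / PI)) as [Hup _].
    set (N := Z.to_nat (up (T / PI))).
    exists N. intros n hn t ht.
    eapply Rle_lt_trans; [apply (Bnd n); auto|].
    destruct (HJ n) as [_ J2].
    assert (hINR : T / PI < INR n).
    { apply Rlt_le_trans with (IZR (up (T / PI))); auto.
      destruct (Z.le_gt_cases 0 (up (T / PI))) as [hnn|hneg].
      2:{ apply Rle_trans with 0; [apply IZR_le; lia| apply pos_INR]. }
      - rewrite <- (Z2Nat.id (up (T / PI))) by auto. rewrite <- INR_IZR_INZ.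
        apply le_INR. unfold N in hn. auto. }
    set (p := INR n * PI + lam) in *.
    assert (hp : T < p).
    { unfold p. apply (Rmult_lt_compat_r PI) in hINR; auto.
      replace (T / PI * PI) with T in hINR by (field; lra). lra. }
    assert (hT : 0 <= T).
    { unfold T. apply Rdiv_le_0_compat; [|auto]. apply Rmult_le_pos; [apply Rmult_le_pos; lra| lra]. }
    assert (hp0 : 0 < p) by lra.
    assert (Hs : sqrt (epsn n) <= sqrt k * (b - a) / p).
    { replace (sqrt k * (b - a) / p) with (sqrt (k * ((b - a) / p) ^ 2)).
      - apply sqrt_le_1; auto. destruct (J_facts a b k lam n (epsn n) hab hk hlam (HJ n)); lra.
        apply Rmult_le_pos; [lra| apply pow2_ge_0].
      - rewrite sqrt_mult by (try lra; apply pow2_ge_0). rewrite sqrt_pow2.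
        + field. lra.
        + apply Rdiv_le_0_compat; lra. }
    apply Rle_lt_trans with (C * (sqrt k * (b - a) / p)).
    + apply Rmult_le_compat_l; auto.
    + replace (C * (sqrt k * (b - a) / p)) with (T * e / p) by (unfold T; field; lra).
      apply (Rmult_lt_reg_r p); auto. replace (T * e / p * p) with (T * e) by (field; lra).
      nra.
Qed.
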